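(* Let $\mathcal K$ be a 2-category and $(v,\{\xi_i:s'_iv\to vs_i\}_{0\le i\le2})$ a 1-cell in $\mathsf{Wdl}^{(2)}(\overline{\mathcal K})$ from $\{\lambda_{i,j}:s_js_i\to s_is_j\}$ (on $A$) to $\{\lambda'_{i,j}:s'_js'_i\to s'_is'_j\}$ (on $A'$). Put $\varphi^1_{0,2}:=\bar\lambda_{012}.s_0\eta_1s_2$, ${\varphi'}^1_{0,2}:=\bar\lambda'_{012}.s'_0\eta'_1s'_2$, $\xi_{012}:=v\bar\lambda_{012}.\xi_0s_1s_2.s'_0\xi_1s_2.s'_0s'_1\xi_2$ and $\xi_{02}:=v\bar\lambda_{02}.\xi_0s_2.s'_0\xi_2$. Then the square of 1-cells in $\mathsf{Mnd}(\overline{\mathcal K})$ $((A',1_{1_{A'}}),{\varphi'}^1_{0,2})\circ((v,\bar v),\xi_{012})=((v,\bar v),\xi_{02})\circ((A,1_{1_A}),\varphi^1_{0,2})$, as 1-cells $(A,(s_0s_1s_2,\bar\lambda_{012}))\to(A',(s'_0s'_2,\bar\lambda'_{02}))$, commutes; i.e. $\xi_{012}.{\varphi'}^1_{0,2}v=v\varphi^1_{0,2}.\xi_{02}$.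
   Context: Conventions. For 1-cells, $uw$ is the horizontal composite ($w$ first); for 2-cells $\alpha,\beta$, $\alpha\beta$ is their horizontal composite; a 1-cell next to a 2-cell means whiskering; $\alpha.\beta$ is vertical composition ($\beta$ first). A monad $(A,t)$ has multiplication $\mu:tt\to t$, unit $\eta:1_A\to t$; decorations carry over. Local idempotent closure $\overline{\mathcal K}$: same 0-cells as $\mathcal K$; 1-cells are pairs $(v,\bar v)$ with $v$ a 1-cell of $\mathcal K$ and $\bar v$ an idempotent 2-cell on $v$; 2-cells $(v,\bar v)\to(v',\bar v')$ are 2-cells $\omega:v\to v'$ of $\mathcal K$ with $\bar v'.\omega=\omega=\omega.\bar v$; compositions from $\mathcal K$, identity 2-cell of $(v,\bar v)$ is $\bar v$. Monads $(A,(t,\bar t))$ in $\overline{\mathcal K}$ satisfy $\mu.t\eta=\mu.\eta t=\bar t$; we write just $t$, and $v$ for $(v,\bar v)$. $\mathsf{Mnd}(\overline{\mathcal K})$: 0-cells monads in $\overline{\mathcal K}$; 1-cells $(A,t)\to(A',t')$ are $(v,\psi)$, $\psi:t'v\to vt$ in $\overline{\mathcal K}$, with $\psi.\mu'v=v\mu.\psi t.t'\psi$, $\psi.\eta'v=v\eta$; composite of $(u,\chi)$ followed by $(v,\psi)$ is $(vu,v\chi.\psi u)$. Weak distributive law in $\overline{\mathcal K}$: monads $(A,t),(A,s)$ and $\lambda:ts\to st$ with $\lambda.\mu s=s\mu.\lambda t.t\lambda$, $\lambda.t\mu=\mu t.s\lambda.\lambda s$, $\lambda.\eta s=\mu t.s\lambda.st\eta.s\eta$,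 $\lambda.t\eta=s\mu.\lambda t.\eta st.\eta t$; idempotent $\bar\lambda:=\mu t.s\lambda.st\eta$. $\mathsf{Wdl}(\overline{\mathcal K})$: 1-cells $\lambda\to\lambda'$ are $(v,\xi,\zeta)$ with $(v,\xi),(v,\zeta)$ 1-cells of $\mathsf{Mnd}(\overline{\mathcal K})$ and $v\lambda.\xi s.t'\zeta=v\bar\lambda.\zeta t.s'\xi.\lambda'v$. $\mathsf{Wdl}^{(2)}(\overline{\mathcal K})$: 0-cells are monads $(A,s_0),(A,s_1),(A,s_2)$ with weak distributive laws $\lambda_{i,j}:s_js_i\to s_is_j$ satisfying $\lambda_{0,1}s_2.s_1\lambda_{0,2}.\lambda_{1,2}s_0=s_0\lambda_{1,2}.\lambda_{0,2}s_1.s_2\lambda_{0,1}$; 1-cells are $v$ with $\xi_i:s'_iv\to vs_i$ such that each $(v,\xi_i,\xi_j)$ ($i<j$) is a 1-cell $\lambda_{i,j}\to\lambda'_{i,j}$ of $\mathsf{Wdl}(\overline{\mathcal K})$. $\bar\lambda_{ij}$ is the idempotent of $\lambda_{i,j}$; $\bar\lambda_{012}:=\overleftarrow\lambda_{0,1,2}.\bar\lambda_{01}s_2$ with $\overleftarrow\lambda_{0,1,2}:=s_0s_1\mu_2.s_0\lambda_{1,2}s_2.\lambda_{0,2}s_1s_2.\eta_2s_0s_1s_2$ (similarly with primes). The monads $(s_0s_2,\bar\lambda_{02})$ (multiplication $\mu_0\mu_2.s_0\lambda_{0,2}s_2$, unit $\lambda_{0,2}.\eta_2\eta_0$) and $(s_0s_1s_2,\bar\lambda_{012})$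 (multiplication $\bar\lambda_{012}.\mu_0\mu_1\mu_2.s_0s_0\lambda_{1,2}s_2.s_0\lambda_{0,1}s_2s_1s_2.s_0s_1\lambda_{0,2}s_1s_2$, unit $\bar\lambda_{012}.s_0\lambda_{1,2}.\lambda_{0,2}s_1.s_2\lambda_{0,1}.\eta_2\eta_1\eta_0$) are monads in $\overline{\mathcal K}$, and $((A,1_{1_A}),\varphi^1_{0,2})$, $((v,\bar v),\xi_{012})$, $((v,\bar v),\xi_{02})$ are 1-cells of $\mathsf{Mnd}(\overline{\mathcal K})$ between them. *)

(* Defs.v *)
(* Plain Rocq (no library needed): strict 2-categories, presented with total
   composition operations that are only constrained on composable data.
   Conventions (as in the paper):
     comp1 v u = vu      (1-cell u first)
     vcomp a b = a.b     (2-cell b first)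
     hcomp a b = ab      (horizontal composite; b on the "first" side). *)
Set Implicit Arguments.
Unset Strict Implicit.

Record TwoCat := {
  ob : Type; c1 : Type; c2 : Type;
  dom1 : c1 -> ob; cod1 : c1 -> ob;
  src2 : c2 -> c1; tgt2 : c2 -> c1;
  id1 : ob -> c1;
  comp1 : c1 -> c1 -> c1;
  id2 : c1 -> c2;
  vcomp : c2 -> c2 -> c2;
  hcomp : c2 -> c2 -> c2;
  dom1_id1 : forall A, dom1 (id1 A) = A;
  cod1_id1 : forall A, cod1 (id1 A) = A;
  dom1_comp1 : forall v u, cod1 u = dom1 v -> dom1 (comp1 v u) = dom1 u;
  cod1_comp1 : forall v u, cod1 u = dom1 v -> cod1 (comp1 v u) = cod1 v;
  comp1_id1l : forall u, comp1 (id1 (cod1 u)) u = u;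
  comp1_id1r : forall u, comp1 u (id1 (dom1 u)) = u;
  comp1A : forall w v u, cod1 u = dom1 v -> cod1 v = dom1 w ->
    comp1 w (comp1 v u) = comp1 (comp1 w v) u;
  dom1_src_tgt : forall a, dom1 (src2 a) = dom1 (tgt2 a);
  cod1_src_tgt : forall a, cod1 (src2 a) = cod1 (tgt2 a);
  src2_id2 : forall u, src2 (id2 u) = u;
  tgt2_id2 : forall u, tgt2 (id2 u) = u;
  src2_vcomp : forall a b, tgt2 b = src2 a -> src2 (vcomp a b) = src2 b;
  tgt2_vcomp : forall a b, tgt2 b = src2 a -> tgt2 (vcomp a b) = tgt2 a;
  vcompA : forall a b c, tgt2 c = src2 b -> tgt2 b = src2 a ->
    vcomp a (vcomp b c) = vcomp (vcomp a b) c;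
  vcomp_id2l : forall a, vcomp (id2 (tgt2 a)) a = a;
  vcomp_id2r : forall a, vcomp a (id2 (src2 a)) = a;
  src2_hcomp : forall a b, cod1 (src2 b) = dom1 (src2 a) ->
    src2 (hcomp a b) = comp1 (src2 a) (src2 b);
  tgt2_hcomp : forall a b, cod1 (src2 b) = dom1 (src2 a) ->
    tgt2 (hcomp a b) = comp1 (tgt2 a) (tgt2 b);
  hcompA : forall a b c, cod1 (src2 c) = dom1 (src2 b) ->
    cod1 (src2 b) = dom1 (src2 a) ->
    hcomp a (hcomp b c) = hcomp (hcomp a b) c;
  hcomp_id1l : forall a, hcomp (id2 (id1 (cod1 (src2 a)))) a = a;
  hcomp_id1r : forall a, hcomp a (id2 (id1 (dom1 (src2 a)))) = a;
  hcomp_id2 : forall v u, cod1 u = dom1 v ->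
    hcomp (id2 v) (id2 u) = id2 (comp1 v u);
  interchange : forall a a' b b', tgt2 a = src2 a' -> tgt2 b = src2 b' ->
    cod1 (src2 b) = dom1 (src2 a) ->
    hcomp (vcomp a' a) (vcomp b' b) = vcomp (hcomp a' b') (hcomp a b)
}.

Section LocalIdempotentClosure.
Variable K : TwoCat.

Local Notation vc := (@vcomp K).

(* 1-cells of the local idempotent closure: pairs (v, vbar) *)
Record c1b := C1b { cell : c1 K; bar : c2 K }.

Definition comp1b (x y : c1b) : c1b :=
  C1b (@comp1 K (cell x) (cell y)) (@hcomp K (bar x) (bar y)).
Definition id1b (A : ob K) : c1b := C1b (@id1 K A) (@id2 K (@id1 K A)).

Definition is1 (u : c1 K) (A B : ob K) := @dom1 K u = A /\ @cod1 K u = B.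
Definition is2 (a : c2 K) (u u' : c1 K) := @src2 K a = u /\ @tgt2 K a = u'.

Definition wf1b (x : c1b) (A B : ob K) :=
  is1 (cell x) A B /\ is2 (bar x) (cell x) (cell x) /\ vc (bar x) (bar x) = bar x.

Definition hom2b (x y : c1b) (w : c2 K) :=
  is2 w (cell x) (cell y) /\ vc (bar y) w = w /\ vc w (bar x) = w.

Definition wl (x : c1b) (a : c2 K) := @hcomp K (bar x) a.
Definition wr (a : c2 K) (x : c1b) := @hcomp K a (bar x).

Record mnd := Mnd { m0 : ob K; mt : c1b; mmu : c2 K; meta : c2 K }.

Definition is_mnd (M : mnd) :=
  let t := mt M in
  wf1b t (m0 M) (m0 M) /\
  hom2b (comp1b t t) t (mmu M) /\ hom2b (id1b (m0 M)) t (meta M) /\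
  vc (mmu M) (wr (mmu M) t) = vc (mmu M) (wl t (mmu M)) /\
  vc (mmu M) (wl t (meta M)) = bar t /\
  vc (mmu M) (wr (meta M) t) = bar t.

Definition is_wdl (T S : mnd) (l : c2 K) :=
  let t := mt T in let s := mt S in
  m0 T = m0 S /\ is_mnd T /\ is_mnd S /\
  hom2b (comp1b t s) (comp1b s t) l /\
  vc l (wr (mmu T) s) = vc (wl s (mmu T)) (vc (wr l t) (wl t l)) /\
  vc l (wl t (mmu S)) = vc (wr (mmu S) t) (vc (wl s l) (wr l s)) /\
  vc l (wr (meta T) s) =
    vc (wr (mmu S) t) (vc (wl s l) (vc (wl (comp1b s t) (meta S)) (wl s (meta T)))) /\
  vc l (wl t (meta S)) =
    vc (wl s (mmu T)) (vc (wr l t) (vc (wr (meta T) (comp1b s t)) (wr (meta S) t))).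

Definition wdl_bar (T S : mnd) (l : c2 K) :=
  vc (wr (mmu S) (mt T)) (vc (wl (mt S) l) (wl (comp1b (mt S) (mt T)) (meta S))).

Definition is_mnd1 (M M' : mnd) (v : c1b) (psi : c2 K) :=
  wf1b v (m0 M) (m0 M') /\
  hom2b (comp1b (mt M') v) (comp1b v (mt M)) psi /\
  vc psi (wr (mmu M') v) = vc (wl v (mmu M)) (vc (wr psi (mt M)) (wl (mt M') psi)) /\
  vc psi (wr (meta M') v) = wl v (meta M).

(* composite of (u,chi) followed by (w,psi) in Mnd(Kbar) *)
Definition comp_mnd1 (uchi wpsi : c1b * c2 K) : c1b * c2 K :=
  let (u, chi) := uchi in let (w, psi) := wpsi in
  (comp1b w u, vc (wl w chi) (wr psi u)).

Definition is_wdl1 (T S : mnd) (l : c2 K) (T' S' : mnd) (l' : c2 K)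
    (v : c1b) (xi zeta : c2 K) :=
  is_mnd1 T T' v xi /\ is_mnd1 S S' v zeta /\
  vc (wl v l) (vc (wr xi (mt S)) (wl (mt T') zeta)) =
  vc (wl v (wdl_bar T S l)) (vc (wr zeta (mt T)) (vc (wl (mt S') xi) (wr l' v))).

(* 0-cells of Wdl^(2)(Kbar): l_ij : s_j s_i -> s_i s_j, plus Yang-Baxter *)
Definition is_wdl2 (S0 S1 S2 : mnd) (l01 l02 l12 : c2 K) :=
  is_wdl S1 S0 l01 /\ is_wdl S2 S0 l02 /\ is_wdl S2 S1 l12 /\
  vc (wr l01 (mt S2)) (vc (wl (mt S1) l02) (wr l12 (mt S0))) =
  vc (wl (mt S0) l12) (vc (wr l02 (mt S1)) (wl (mt S2) l01)).

Definition is_wdl2_1 (S0 S1 S2 : mnd) (l01 l02 l12 : c2 K)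
    (S0' S1' S2' : mnd) (l01' l02' l12' : c2 K) (v : c1b) (x0 x1 x2 : c2 K) :=
  is_wdl1 S1 S0 l01 S1' S0' l01' v x1 x0 /\
  is_wdl1 S2 S0 l02 S2' S0' l02' v x2 x0 /\
  is_wdl1 S2 S1 l12 S2' S1' l12' v x2 x1.

Definition larrow012 (S0 S1 S2 : mnd) (l02 l12 : c2 K) :=
  let s0 := mt S0 in let s1 := mt S1 in let s2 := mt S2 in
  vc (wl (comp1b s0 s1) (mmu S2))
    (vc (wr (wl s0 l12) s2)
      (vc (wr l02 (comp1b s1 s2)) (wr (meta S2) (comp1b s0 (comp1b s1 s2))))).

Definition lbar012 (S0 S1 S2 : mnd) (l01 l02 l12 : c2 K) :=
  vc (larrow012 S0 S1 S2 l02 l12) (wr (wdl_bar S1 S0 l01) (mt S2)).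

Definition phi1_02 (S0 S1 S2 : mnd) (l01 l02 l12 : c2 K) :=
  vc (lbar012 S0 S1 S2 l01 l02 l12) (wr (wl (mt S0) (meta S1)) (mt S2)).

Definition xi012 (S0 S1 S2 : mnd) (l01 l02 l12 : c2 K) (S0' S1' : mnd)
    (v : c1b) (x0 x1 x2 : c2 K) :=
  vc (wl v (lbar012 S0 S1 S2 l01 l02 l12))
    (vc (wr x0 (comp1b (mt S1) (mt S2)))
      (vc (wr (wl (mt S0') x1) (mt S2)) (wl (comp1b (mt S0') (mt S1')) x2))).

Definition xi02 (S0 S2 : mnd) (l02 : c2 K) (S0' : mnd) (v : c1b) (x0 x2 : c2 K) :=
  vc (wl v (wdl_bar S2 S0 l02)) (vc (wr x0 (mt S2)) (wl (mt S0') x2)).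

End LocalIdempotentClosure.

(* Main.v *)
Require Import Defs.
From Stdlib Require Import List.
Import ListNotations.
Set Implicit Arguments.
Unset Strict Implicit.

Section Frame.
Variable K : TwoCat.
Notation C1 := (c1 K). Notation C2 := (c2 K). Notation OB := (ob K).
Notation vc := (@vcomp K). Notation hc := (@hcomp K).

Inductive path : OB -> list (c1b K) -> OB -> Prop :=
| path_nil X : path X [] X
| path_cons X l Y x Z : path X l Y -> wf1b x Y Z -> path X (x :: l) Z.

Definition cellO (X : OB) (l : list (c1b K)) : C1 :=
  fold_right (fun x acc => comp1 (cell x) acc) (id1 X) l.
Definition barO (X : OB) (l : list (c1b K)) : C2 :=
  fold_right (fun x acc => hc (bar x) acc) (id2 (id1 X)) l.

Lemma path_ty X l Y : path X l Y -> dom1 (cellO X l) = X /\ cod1 (cellO X l) = Y.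
Proof.
  induction 1 as [X|X l Y x Z P IH W]; simpl.
  - rewrite dom1_id1, cod1_id1; auto.
  - destruct W as [[W1 W2] _]. destruct IH as [I1 I2].
    rewrite dom1_comp1, cod1_comp1; try congruence. auto.
Qed.

Lemma barO_ty X l Y : path X l Y ->
  src2 (barO X l) = cellO X l /\ tgt2 (barO X l) = cellO X l /\
  vc (barO X l) (barO X l) = barO X l.
Proof.
  induction 1 as [X|X l Y x Z P IH W]; simpl.
  - pose proof (vcomp_id2l (id2 (id1 X))) as E; rewrite tgt2_id2 in E.
    rewrite src2_id2, tgt2_id2, E. auto.
  - destruct IH as [I1 [I2 I3]]. destruct W as [[W1 W2] [[W3 W4] W5]].
    pose proof (path_ty P) as [P1 P2].
    assert (Hc : cod1 (src2 (barO X l)) = dom1 (src2 (bar x))) by congruence.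
    rewrite src2_hcomp, tgt2_hcomp by assumption.
    rewrite <- interchange by congruence.
    rewrite W5, I3. split; [congruence|]. split; [congruence|auto].
Qed.

Definition T2 X Y (a : C2) S T :=
  path X S Y /\ path X T Y /\ src2 a = cellO X S /\ tgt2 a = cellO X T /\
  vc (barO X T) a = a /\ vc a (barO X S) = a.

Lemma path_app X S' Z S Y : path X S' Z -> path Z S Y -> path X (S ++ S') Y.
Proof.
  intros P1 P2; induction P2; simpl; auto. econstructor; eauto.
Qed.

Lemma cellO_app X S' Z S Y : path X S' Z -> path Z S Y ->
  cellO X (S ++ S') = comp1 (cellO Z S) (cellO X S').
Proof.
  intros P1 P2; induction P2 as [Z|Z l Y x W P IH Wf]; simpl.
  - destruct (path_ty P1) as [_ H2]. rewrite <- H2. now rewrite comp1_id1l.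
  - rewrite (IH P1). destruct Wf as [[W1 W2] _].
    destruct (path_ty P1) as [A1 A2]. destruct (path_ty P) as [B1 B2].
    rewrite comp1A; congruence.
Qed.

Lemma barO_app X S' Z S Y : path X S' Z -> path Z S Y ->
  barO X (S ++ S') = hc (barO Z S) (barO X S').
Proof.
  intros P1 P2; induction P2 as [Z|Z l Y x W P IH Wf]; simpl.
  - destruct (path_ty P1) as [_ H2]. destruct (barO_ty P1) as [H3 _].
    rewrite <- H2. rewrite <- H3. now rewrite hcomp_id1l.
  - rewrite (IH P1). destruct Wf as [[W1 W2] [[W3 W4] _]].
    destruct (path_ty P1) as [A1 A2]. destruct (path_ty P) as [B1 B2].
    destruct (barO_ty P1) as [C1 _]. destruct (barO_ty P) as [D1 _].
    rewrite hcompA; congruence.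
Qed.

Lemma T2_v X Y a b S T U : T2 X Y a T U -> T2 X Y b S T -> T2 X Y (vc a b) S U.
Proof.
  intros [P1 [P2 [A1 [A2 [A3 A4]]]]] [Q1 [Q2 [B1 [B2 [B3 B4]]]]].
  destruct (barO_ty P2) as [C1 [C2 _]]. destruct (barO_ty Q1) as [D1 [D2 _]].
  assert (E : tgt2 b = src2 a) by congruence.
  repeat split; try assumption.
  - rewrite src2_vcomp; auto.
  - rewrite tgt2_vcomp; auto.
  - rewrite vcompA by congruence. now rewrite A3.
  - rewrite <- vcompA by congruence. now rewrite B4.
Qed.

Lemma T2_h X Z Y a b S T S' T' : T2 Z Y a S T -> T2 X Z b S' T' ->
  T2 X Y (hc a b) (S ++ S') (T ++ T').
Proof.
  intros [P1 [P2 [A1 [A2 [A3 A4]]]]] [Q1 [Q2 [B1 [B2 [B3 B4]]]]].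
  destruct (path_ty P1) as [E1 E2]. destruct (path_ty Q1) as [F1 F2].
  destruct (path_ty P2) as [E3 E4]. destruct (path_ty Q2) as [F3 F4].
  destruct (barO_ty P1) as [G1 [G2 _]]. destruct (barO_ty Q1) as [H1 [H2 _]].
  destruct (barO_ty P2) as [G3 [G4 _]]. destruct (barO_ty Q2) as [H3 [H4 _]].
  assert (Hc : cod1 (src2 b) = dom1 (src2 a)) by congruence.
  repeat split.
  - eapply path_app; eauto.
  - eapply path_app; eauto.
  - rewrite src2_hcomp by auto. rewrite A1, B1. erewrite cellO_app; eauto.
  - rewrite tgt2_hcomp by auto. rewrite A2, B2. erewrite cellO_app; eauto.
  - erewrite barO_app by eauto. rewrite <- interchange by congruence.
    now rewrite A3, B3.
  - erewrite barO_app by eauto. rewrite <- interchange by congruence.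
    now rewrite A4, B4.
Qed.

Lemma T2_barO X S Y : path X S Y -> T2 X Y (barO X S) S S.
Proof.
  intros P. destruct (barO_ty P) as [A [B C]]. repeat split; auto.
Qed.

Lemma T2_id X : T2 X X (id2 (id1 X)) [] [].
Proof. apply (T2_barO (path_nil X)). Qed.

Lemma T2_bar x X Y : wf1b x X Y -> T2 X Y (bar x) [x] [x].
Proof.
  intros W. pose proof (path_cons (path_nil X) W) as P.
  destruct W as [[W1 W2] [[W3 W4] W5]].
  assert (E1 : cellO X [x] = cell x).
  { simpl. rewrite <- W1. apply comp1_id1r. }
  assert (E2 : barO X [x] = bar x).
  { simpl. rewrite <- W1, <- W3. apply hcomp_id1r. }
  repeat split; auto; congruence.
Qed.

Lemma T2_conv X Y a S T S' T' : T2 X Y a S T -> S = S' -> T = T' -> T2 X Y a S' T'.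
Proof. intros; subst; auto. Qed.


Lemma T2_src X Y a S T : T2 X Y a S T -> src2 a = cellO X S.
Proof. intros [_ [_ [H _]]]; exact H. Qed.
Lemma T2_tgt X Y a S T : T2 X Y a S T -> tgt2 a = cellO X T.
Proof. intros [_ [_ [_ [H _]]]]; exact H. Qed.
Lemma T2_dom X Y a S T : T2 X Y a S T -> dom1 (src2 a) = X.
Proof. intros [P [_ [H _]]]. rewrite H. apply (path_ty P). Qed.
Lemma T2_cod X Y a S T : T2 X Y a S T -> cod1 (src2 a) = Y.
Proof. intros [P [_ [H _]]]. rewrite H. apply (path_ty P). Qed.
Lemma T2_absl X Y a S T : T2 X Y a S T -> vc (barO X T) a = a.
Proof. intros [_ [_ [_ [_ [H _]]]]]; exact H. Qed.
Lemma T2_absr X Y a S T : T2 X Y a S T -> vc a (barO X S) = a.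
Proof. intros [_ [_ [_ [_ [_ H]]]]]; exact H. Qed.
Lemma T2_pS X Y a S T : T2 X Y a S T -> path X S Y.
Proof. intros [H _]; exact H. Qed.
Lemma T2_pT X Y a S T : T2 X Y a S T -> path X T Y.
Proof. intros [_ [H _]]; exact H. Qed.

Lemma T2_v' X Y a b S T T' U : T2 X Y a T U -> T2 X Y b S T' -> T' = T -> T2 X Y (vc a b) S U.
Proof. intros A B E; subst; eapply T2_v; eauto. Qed.

Lemma hc_idl X Y a S T : T2 X Y a S T -> hc (id2 (id1 Y)) a = a.
Proof. intros H. rewrite <- (T2_cod H). apply hcomp_id1l. Qed.
Lemma hc_idr X Y a S T : T2 X Y a S T -> hc a (id2 (id1 X)) = a.
Proof. intros H. rewrite <- (T2_dom H). apply hcomp_id1r. Qed.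

End Frame.

Ltac pathtac :=
  lazymatch goal with
  | |- path _ (_ :: _) _ => eapply path_cons; [pathtac | eassumption]
  | |- path _ [] _ => apply path_nil
  | |- path _ (_ ++ _) _ => eapply path_app; [pathtac | pathtac]
  | _ => eassumption
  end.

Ltac leq := repeat rewrite <- app_assoc; simpl; reflexivity.

Ltac ty2e :=
  lazymatch goal with
  | |- T2 _ _ (vcomp _ _) _ _ => eapply T2_v'; [ty2e | ty2e | leq]
  | |- T2 _ _ (hcomp _ _) _ _ => eapply T2_h; [ty2e | ty2e]
  | |- T2 _ _ (barO _ _) _ _ => eapply T2_barO; pathtac
  | |- T2 _ _ (bar _) _ _ => eapply T2_bar; eassumption
  | |- T2 _ _ (id2 (id1 _)) _ _ => apply T2_id
  | _ => eassumption
  end.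

Ltac ty2 := eapply T2_conv; [ty2e | leq | leq].

Ltac side :=
  lazymatch goal with
  | |- tgt2 ?p = src2 ?q =>
      let Hp := fresh in let Hq := fresh in
      eassert (Hp : T2 _ _ p _ _) by ty2e; eassert (Hq : T2 _ _ q _ _) by ty2e;
      rewrite (T2_tgt Hp), (T2_src Hq); clear Hp Hq; f_equal; leq
  | |- cod1 (src2 ?p) = dom1 (src2 ?q) =>
      let Hp := fresh in let Hq := fresh in
      eassert (Hp : T2 _ _ p _ _) by ty2e; eassert (Hq : T2 _ _ q _ _) by ty2e;
      rewrite (T2_cod Hp), (T2_dom Hq); clear Hp Hq; reflexivity
  end.

Section Layers.
Variable K : TwoCat.
Notation C2 := (c2 K). Notation OB := (ob K).
Notation vc := (@vcomp K). Notation hc := (@hcomp K).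

Record lay := Lay { lL : list (c1b K); lA : C2; lR : list (c1b K) }.

Definition whL (L : list (c1b K)) (c : C2) : C2 :=
  fold_right (fun x acc => hc (bar x) acc) c L.
Definition li (X : OB) (ly : lay) : C2 :=
  whL (lL ly) (hc (lA ly) (barO X (lR ly))).
Definition interp (X : OB) (S : list (c1b K)) (D : list lay) : C2 :=
  fold_right (fun ly acc => vc (li X ly) acc) (barO X S) D.

Definition TL X Y ly S T := exists Z W Sa Ta,
  T2 Z W (lA ly) Sa Ta /\ path X (lR ly) Z /\ path W (lL ly) Y /\
  S = lL ly ++ Sa ++ lR ly /\ T = lL ly ++ Ta ++ lR ly.

Inductive TD X Y : list (c1b K) -> list lay -> list (c1b K) -> Prop :=
| TD_nil S : path X S Y -> TD X Y S [] S
| TD_cons S D T ly U : TD X Y S D T -> TL X Y ly T U -> TD X Y S (ly :: D) U.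

Lemma whL_eq W L Y c X S T : path W L Y -> T2 X W c S T -> whL L c = hc (barO W L) c.
Proof.
  intros P Hc. induction P as [W|W l Y' x Z P IH Wf]; simpl.
  - symmetry. eapply hc_idl; eauto.
  - rewrite (IH Hc). rewrite hcompA; [reflexivity| side | side].
Qed.

Lemma li_T2 X Y ly S T : TL X Y ly S T -> T2 X Y (li X ly) S T.
Proof.
  intros [Z [W [Sa [Ta [Ha [PR [PL [E1 E2]]]]]]]]. subst. destruct ly as [L a R]; simpl in *.
  unfold li; simpl.
  assert (H1 : T2 X W (hc a (barO X R)) (Sa ++ R) (Ta ++ R)) by ty2e.
  erewrite whL_eq by eauto. ty2e.
Qed.

Lemma TD_path X Y S D T : TD X Y S D T -> path X S Y /\ path X T Y.
Proof.
  induction 1 as [S P| S D T ly U HD IH HL]; auto.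
  split; [apply IH|]. apply li_T2 in HL. eapply T2_pT; eauto.
Qed.

Lemma interp_T2 X Y S D T : TD X Y S D T -> T2 X Y (interp X S D) S T.
Proof.
  induction 1 as [S P| S D T ly U HD IH HL]; simpl.
  - apply T2_barO; auto.
  - apply li_T2 in HL. eapply T2_v; eauto.
Qed.

Lemma interp_app X Y S T U D1 D2 : TD X Y T D1 U -> TD X Y S D2 T ->
  interp X S (D1 ++ D2) = vc (interp X T D1) (interp X S D2).
Proof.
  intros H1 H2. pose proof (interp_T2 H2) as I2.
  induction H1 as [T P| T' D T ly U HD IH HL]; simpl.
  - symmetry. eapply T2_absl; eauto.
  - rewrite (IH H2 I2). apply li_T2 in HL. pose proof (interp_T2 HD).
    rewrite vcompA; [reflexivity|side|side].
Qed.

Lemma TD_app X Y S T U D1 D2 : TD X Y T D1 U -> TD X Y S D2 T -> TD X Y S (D1 ++ D2) U.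
Proof.
  intros H1 H2; induction H1; simpl; auto. econstructor; eauto.
Qed.

Definition wlay L R ly := Lay (L ++ lL ly) (lA ly) (lR ly ++ R).

Lemma TL_w X0 Y0 ly S T X Y L R : TL X0 Y0 ly S T -> path X R X0 -> path Y0 L Y ->
  TL X Y (wlay L R ly) (L ++ S ++ R) (L ++ T ++ R).
Proof.
  intros [Z [W [Sa [Ta [Ha [PR [PL [E1 E2]]]]]]]] P1 P2. subst.
  exists Z, W, Sa, Ta; unfold wlay; simpl.
  refine (conj Ha (conj _ (conj _ (conj _ _)))).
  - eapply path_app; eauto.
  - eapply path_app; eauto.
  - leq.
  - leq.
Qed.

Lemma TD_w X0 Y0 S D T X Y L R : TD X0 Y0 S D T -> path X R X0 -> path Y0 L Y ->
  TD X Y (L ++ S ++ R) (map (wlay L R) D) (L ++ T ++ R).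
Proof.
  intros HD P1 P2; induction HD; simpl.
  - constructor. repeat (eapply path_app; eauto).
  - econstructor; eauto. eapply TL_w; eauto.
Qed.

Lemma whL_app L1 L2 c : whL (L1 ++ L2) c = whL L1 (whL L2 c).
Proof. unfold whL; apply fold_right_app. Qed.

Lemma whL_hc Z W Y L c d S T X S' T' : T2 Z W c S T -> T2 X Z d S' T' -> path W L Y ->
  whL L (hc c d) = hc (whL L c) d.
Proof.
  intros Hc Hd P.
  assert (T2 X W (hc c d) (S ++ S') (T ++ T')) by ty2e.
  erewrite (whL_eq P) by eauto. erewrite (whL_eq P Hc).
  rewrite hcompA; [reflexivity|side|side].
Qed.

Lemma whL_vc Z W Y L c d S T U : T2 Z W c T U -> T2 Z W d S T -> path W L Y ->
  whL L (vc c d) = vc (whL L c) (whL L d).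
Proof.
  intros Hc Hd P.
  assert (T2 Z W (vc c d) S U) by ty2e.
  erewrite (whL_eq P) by eauto. erewrite (whL_eq P Hc). erewrite (whL_eq P Hd).
  pose proof (barO_ty P) as [_ [_ I]].
  rewrite <- I at 1. rewrite interchange; [reflexivity|side|side|side].
Qed.

Lemma hc_vc_r Z W X R c d S T U : T2 Z W c T U -> T2 Z W d S T -> path X R Z ->
  hc (vc c d) (barO X R) = vc (hc c (barO X R)) (hc d (barO X R)).
Proof.
  intros Hc Hd P.
  pose proof (barO_ty P) as [_ [_ I]].
  rewrite <- I at 1. rewrite interchange; [reflexivity|side|side|side].
Qed.

Lemma interp_wl X0 Y0 S0 M T0 X Y L R : TD X0 Y0 S0 M T0 -> path X R X0 -> path Y0 L Y ->
  interp X (L ++ S0 ++ R) (map (wlay L R) M) = whL L (hc (interp X0 S0 M) (barO X R)).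
Proof.
  intros HM PR PL. induction HM as [S P| S D T ly U HD IH HL]; simpl.
  - assert (T2 X Y0 (hc (barO X0 S) (barO X R)) (S ++ R) (S ++ R)) by ty2e.
    erewrite (whL_eq PL) by eauto.
    erewrite barO_app; [| eapply path_app; eauto | eauto].
    erewrite barO_app; eauto.
  - rewrite IH. pose proof (interp_T2 HD) as ID. pose proof (li_T2 HL) as IL.
    destruct HL as [Z [W [Sa [Ta [Ha [PR' [PL' [E1 E2]]]]]]]].
    destruct ly as [L' a R']; simpl in *. subst.
    unfold li at 1. unfold wlay; simpl. rewrite whL_app.
    erewrite (barO_app PR PR').
    assert (E : hc a (hc (barO X0 R') (barO X R)) = hc (hc a (barO X0 R')) (barO X R)).
    { rewrite hcompA; [reflexivity|side|side]. }
    rewrite E. clear E.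
    assert (T2 X0 W (hc a (barO X0 R')) (Sa ++ R') (Ta ++ R')) by ty2e.
    erewrite (whL_hc H (T2_barO PR) PL').
    fold (li X0 (Lay L' a R')).
    assert (T2 X Y0 (hc (li X0 (Lay L' a R')) (barO X R))
              ((L' ++ Sa ++ R') ++ R) ((L' ++ Ta ++ R') ++ R)) by ty2e.
    assert (T2 X Y0 (hc (interp X0 S D) (barO X R)) (S ++ R) ((L' ++ Sa ++ R') ++ R)) by ty2e.
    erewrite <- whL_vc; eauto.
    f_equal. symmetry. eapply hc_vc_r; eauto.
Qed.

End Layers.

Section Ops.
Variable K : TwoCat.
Notation C2 := (c2 K). Notation OB := (ob K).
Notation vc := (@vcomp K). Notation hc := (@hcomp K).

Lemma rw_at X Y S D V n (L R : list (c1b K)) X0 Y0 S0 T0 (M M' : list (lay K)) :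
  interp X0 S0 M = interp X0 S0 M' -> TD X0 Y0 S0 M T0 -> TD X0 Y0 S0 M' T0 ->
  path X R X0 -> path Y0 L Y ->
  TD X Y S (skipn (n + length M) D) (L ++ S0 ++ R) ->
  TD X Y (L ++ T0 ++ R) (firstn n D) V ->
  firstn (length M) (skipn n D) = map (wlay L R) M ->
  interp X S D = interp X S (firstn n D ++ map (wlay L R) M' ++ skipn (n + length M) D).
Proof.
  intros E HM HM' PR PL HQ HP Hseg.
  assert (ED : D = firstn n D ++ map (wlay L R) M ++ skipn (n + length M) D).
  { rewrite <- Hseg. rewrite <- (firstn_skipn n D) at 1. f_equal.
    rewrite <- (firstn_skipn (length M) (skipn n D)) at 1. f_equal.
    rewrite skipn_skipn. f_equal. apply PeanoNat.Nat.add_comm. }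
  rewrite ED at 1.
  pose proof (TD_w HM PR PL) as W1. pose proof (TD_w HM' PR PL) as W2.
  rewrite (interp_app HP (TD_app W1 HQ)), (interp_app W1 HQ).
  rewrite (interp_app HP (TD_app W2 HQ)), (interp_app W2 HQ).
  rewrite (interp_wl HM PR PL), (interp_wl HM' PR PL), E. reflexivity.
Qed.

Lemma swap_core Z W (a : C2) (Sa Ta : list (c1b K)) X0 Z' (b : C2) Sb Tb M0 :
  T2 Z W a Sa Ta -> T2 X0 Z' b Sb Tb -> path Z' M0 Z ->
  interp X0 (Sa ++ M0 ++ Sb) [Lay [] a (M0 ++ Tb); Lay (Sa ++ M0) b []] =
  interp X0 (Sa ++ M0 ++ Sb) [Lay (Ta ++ M0) b []; Lay [] a (M0 ++ Sb)].
Proof.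
  intros Ha Hb P.
  pose proof (T2_pS Ha) as PSa. pose proof (T2_pT Ha) as PTa.
  pose proof (T2_pS Hb) as PSb. pose proof (T2_pT Hb) as PTb.
  assert (Eb : forall L Y, path Z' L Y -> li X0 (Lay L b []) = hc (barO Z' L) b).
  { intros L Y PL. unfold li; simpl lL; simpl lA; simpl lR.
    change (barO X0 []) with (id2 (id1 X0)). rewrite (hc_idr Hb). eapply whL_eq; eauto. }
  assert (Ea : forall R, li X0 (Lay [] a R) = hc a (barO X0 R)) by reflexivity.
  change (vc (li X0 (Lay [] a (M0 ++ Tb))) (vc (li X0 (Lay (Sa ++ M0) b [])) (barO X0 (Sa ++ M0 ++ Sb)))
        = vc (li X0 (Lay (Ta ++ M0) b [])) (vc (li X0 (Lay [] a (M0 ++ Sb))) (barO X0 (Sa ++ M0 ++ Sb)))).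
  rewrite (Eb (Sa ++ M0) W) by pathtac. rewrite (Eb (Ta ++ M0) W) by pathtac.
  rewrite !Ea.
  assert (H1 : T2 X0 W (hc (barO Z' (Sa ++ M0)) b) (Sa ++ M0 ++ Sb) (Sa ++ M0 ++ Tb)) by ty2.
  assert (H2 : T2 X0 W (hc a (barO X0 (M0 ++ Sb))) (Sa ++ M0 ++ Sb) (Ta ++ M0 ++ Sb)) by ty2.
  rewrite (T2_absr H1), (T2_absr H2).
  rewrite (barO_app P PSa), (barO_app P PTa), (barO_app PTb P), (barO_app PSb P).
  pose proof (barO_ty P) as [_ [_ IM]].
  pose proof (T2_absl Ha) as Aa1. pose proof (T2_absr Ha) as Aa2.
  pose proof (T2_absl Hb) as Ab1. pose proof (T2_absr Hb) as Ab2.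
  set (BM := barO Z' M0) in *. set (BSa := barO Z Sa) in *. set (BTa := barO Z Ta) in *.
  set (BSb := barO X0 Sb) in *. set (BTb := barO X0 Tb) in *.
  assert (TBM : T2 Z' Z BM M0 M0) by (apply T2_barO; auto).
  assert (TBSa : T2 Z W BSa Sa Sa) by (apply T2_barO; auto).
  assert (TBTa : T2 Z W BTa Ta Ta) by (apply T2_barO; auto).
  assert (TBSb : T2 X0 Z' BSb Sb Sb) by (apply T2_barO; auto).
  assert (TBTb : T2 X0 Z' BTb Tb Tb) by (apply T2_barO; auto).
  clearbody BM BSa BTa BSb BTb.
  transitivity (hc a (hc BM b)).
  - rewrite <- (hcompA (a:=BSa)) by side.
    rewrite <- (@interchange K BSa a (hc BM b) (hc BM BTb)) by side.
    rewrite <- (@interchange K BM BM b BTb) by side.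
    rewrite Aa2, IM, Ab1. reflexivity.
  - rewrite <- (hcompA (a:=BTa)) by side.
    rewrite <- (@interchange K a BTa (hc BM BSb) (hc BM b)) by side.
    rewrite <- (@interchange K BM BM BSb b) by side.
    rewrite Aa1, IM, Ab2. reflexivity.
Qed.

Lemma bar_core (x : c1b K) X0 Y0 : wf1b x X0 Y0 ->
  interp X0 [x] [Lay [] (bar x) []] = interp X0 [x] [].
Proof.
  intros W. change (vc (barO X0 [x]) (barO X0 [x]) = barO X0 [x]).
  apply (barO_ty (path_cons (path_nil X0) W)).
Qed.

Lemma R_atom X Y (a : C2) S T : T2 X Y a S T -> a = interp X S [Lay [] a []].
Proof.
  intros H. change (a = vc (hc a (id2 (id1 X))) (barO X S)).
  rewrite (hc_idr H). symmetry; apply (T2_absr H).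
Qed.

Lemma R_v X Y S T U a b Da Db : a = interp X T Da -> b = interp X S Db ->
  TD X Y T Da U -> TD X Y S Db T -> vc a b = interp X S (Da ++ Db).
Proof. intros -> -> H1 H2. symmetry; apply (interp_app H1 H2). Qed.

Lemma R_hl X Y Y' S T a D (x : c1b K) : a = interp X S D -> TD X Y S D T -> wf1b x Y Y' ->
  hc (bar x) a = interp X (x :: S) (map (wlay [x] []) D).
Proof.
  intros -> HD W.
  pose proof (interp_wl HD (path_nil X) (path_cons (path_nil Y) W)) as E.
  rewrite app_nil_r in E. simpl in E. rewrite E.
  change (barO X []) with (id2 (id1 X)). rewrite (hc_idr (interp_T2 HD)). reflexivity.
Qed.

Lemma R_hr X X' Y S T a D (x : c1b K) : a = interp X S D -> TD X Y S D T -> wf1b x X' X ->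
  hc a (bar x) = interp X' (S ++ [x]) (map (wlay [] [x]) D).
Proof.
  intros -> HD W.
  pose proof (interp_wl HD (path_cons (path_nil X') W) (path_nil Y)) as E.
  simpl in E. rewrite E.
  change (barO X' []) with (id2 (id1 X')). rewrite (hc_idr (T2_bar W)). reflexivity.
Qed.

Lemma R_idl X Y S T a D : a = interp X S D -> TD X Y S D T ->
  hc (id2 (id1 Y)) a = interp X S D.
Proof. intros -> HD. apply (hc_idl (interp_T2 HD)). Qed.

Lemma R_idr X Y S T a D : a = interp X S D -> TD X Y S D T ->
  hc a (id2 (id1 X)) = interp X S D.
Proof. intros -> HD. apply (hc_idr (interp_T2 HD)). Qed.

Lemma R_hA1 Z1 Z2 Z3 Z4 p q a Sp Tp Sq Tq Sa Ta E :
  T2 Z3 Z4 p Sp Tp -> T2 Z2 Z3 q Sq Tq -> T2 Z1 Z2 a Sa Ta ->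
  hc p (hc q a) = E -> hc (hc p q) a = E.
Proof. intros Hp Hq Ha <-. rewrite hcompA; [reflexivity|side|side]. Qed.

Lemma R_hA2 Z1 Z2 Z3 Z4 p q a Sp Tp Sq Tq Sa Ta E :
  T2 Z3 Z4 a Sa Ta -> T2 Z2 Z3 p Sp Tp -> T2 Z1 Z2 q Sq Tq ->
  hc (hc a p) q = E -> hc a (hc p q) = E.
Proof. intros Ha Hp Hq <-. rewrite hcompA; [reflexivity|side|side]. Qed.

End Ops.

Ltac tyL := eexists; eexists; eexists; eexists; cbn [lA lL lR];
  split; [ty2e | split; [pathtac | split; [pathtac | split; [leq | leq]]]].

Ltac tyD := cbn [map app lL lA lR firstn skipn length Nat.add]; unfold wlay; cbn [app lL lA lR];
  lazymatch goal with
  | |- TD _ _ _ [] _ => apply TD_nil; pathtac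
  | |- TD _ _ _ (_ :: _) _ => eapply TD_cons; [tyD | tyL]
  end.

Ltac reify :=
  lazymatch goal with
  | |- vcomp ?a ?b = _ => eapply R_v; [reify | reify | tyD | tyD]
  | |- hcomp (id2 (id1 _)) ?a = _ => eapply R_idl; [reify | tyD]
  | |- hcomp ?a (id2 (id1 _)) = _ => eapply R_idr; [reify | tyD]
  | |- hcomp (bar ?x) ?a = _ => eapply R_hl; [reify | tyD | eassumption]
  | |- hcomp ?a (bar ?x) = _ => eapply R_hr; [reify | tyD | eassumption]
  | |- hcomp ?a (hcomp ?p ?q) = _ => eapply R_hA2; [ty2e | ty2e | ty2e | reify]
  | |- hcomp (hcomp ?p ?q) ?a = _ => eapply R_hA1; [ty2e | ty2e | ty2e | reify]
  | |- ?a = _ => eapply R_atom; ty2e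
  end.

Ltac rfy := etransitivity; [reify | reflexivity].

Ltac lcbn := cbn [firstn skipn map app lL lA lR length Nat.add]; unfold wlay; cbn [app lL lA lR].

Ltac rwa n L R E :=
  etransitivity; [ eapply (rw_at (n:=n) (L:=L) (R:=R) E);
    [tyD | tyD | pathtac | pathtac | tyD | tyD | reflexivity] | lcbn ].

Ltac swapF n :=
  lazymatch goal with |- interp ?X ?S ?D = _ =>
  let l := eval cbn [firstn skipn] in (firstn 2 (skipn n D)) in
  lazymatch l with
  | [Lay ?L ?a ?R1; Lay ?L2 ?b ?R2] =>
     let Ha := fresh "Ha" in let Hb := fresh "Hb" in
     eassert (Ha : T2 _ _ a _ _) by ty2e; eassert (Hb : T2 _ _ b _ _) by ty2e;
     lazymatch type of Ha with T2 _ _ _ ?Sa ?Ta =>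
       let M0 := eval cbn [skipn length Nat.add app] in (skipn (length L + length Sa) L2) in
       rwa n L R2 (swap_core (M0 := M0) Ha Hb ltac:(pathtac)); clear Ha Hb
     end
  end end.

Ltac swapB n :=
  lazymatch goal with |- interp ?X ?S ?D = _ =>
  let l := eval cbn [firstn skipn] in (firstn 2 (skipn n D)) in
  lazymatch l with
  | [Lay ?L1 ?b ?R1; Lay ?L2 ?a ?R2] =>
     let Ha := fresh "Ha" in let Hb := fresh "Hb" in
     eassert (Ha : T2 _ _ a _ _) by ty2e; eassert (Hb : T2 _ _ b _ _) by ty2e;
     lazymatch type of Ha with T2 _ _ _ ?Sa ?Ta =>
       let M0 := eval cbn [skipn length Nat.add app] in (skipn (length L2 + length Ta) L1) in
       rwa n L2 R1 (eq_sym (swap_core (M0 := M0) Ha Hb ltac:(pathtac))); clear Ha Hb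
     end
  end end.

Ltac sw n := first [swapF n | swapB n].

Ltac rmbar n :=
  lazymatch goal with |- interp ?X ?S ?D = _ =>
  let l := eval cbn [firstn skipn] in (firstn 1 (skipn n D)) in
  lazymatch l with
  | [Lay ?L (bar ?x) ?R] =>
     let Hx := fresh in
     eassert (Hx : wf1b x _ _) by eassumption;
     rwa n L R (bar_core Hx); clear Hx
  end end.

Arguments interp : simpl never.
Arguments li : simpl never.
Arguments barO : simpl never.
Arguments cellO : simpl never.
Arguments whL : simpl never.

Section Ax.
Variable K : TwoCat.
Notation C2 := (c2 K). Notation OB := (ob K).
Notation vc := (@vcomp K). Notation hc := (@hcomp K).

Lemma cellO1 (x : c1b K) X Y : wf1b x X Y -> cellO X [x] = cell x.
Proof. intros [[W1 W2] _]. simpl. rewrite <- W1. apply comp1_id1r. Qed.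
Lemma barO1 (x : c1b K) X Y : wf1b x X Y -> barO X [x] = bar x.
Proof. intros [[W1 W2] [[W3 W4] _]]. simpl. rewrite <- W1, <- W3. apply hcomp_id1r. Qed.

Lemma hb_T2 (x y : c1b K) a X Y S T : hom2b x y a -> path X S Y -> path X T Y ->
  cellO X S = cell x -> barO X S = bar x -> cellO X T = cell y -> barO X T = bar y ->
  T2 X Y a S T.
Proof.
  intros [[H1 H2] [H3 H4]] P1 P2 E1 E2 E3 E4. repeat split; auto; congruence.
Qed.

Lemma cellO2 (x y : c1b K) X Z Y : wf1b x Z Y -> wf1b y X Z -> cellO X [x;y] = comp1 (cell x) (cell y).
Proof. intros W1 W2. change (comp1 (cell x) (cellO X [y]) = comp1 (cell x) (cell y)).
  now rewrite (cellO1 W2). Qed.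
Lemma barO2 (x y : c1b K) X Z Y : wf1b x Z Y -> wf1b y X Z -> barO X [x;y] = hc (bar x) (bar y).
Proof. intros W1 W2. change (hc (bar x) (barO X [y]) = hc (bar x) (bar y)).
  now rewrite (barO1 W2). Qed.

Ltac hbt := eapply hb_T2; [eassumption | pathtac | pathtac | .. ];
  first [ reflexivity | eapply cellO1; eassumption | eapply barO1; eassumption
        | eapply cellO2; eassumption | eapply barO2; eassumption ].


Lemma mnd_T2 (A : OB) (t : c1b K) (m e : C2) : is_mnd (Mnd A t m e) -> wf1b t A A /\ T2 A A m [t;t] [t] /\ T2 A A e [] [t].
Proof.
  intros [W [Hm [He _]]]. simpl in *. split; [exact W|]. split; hbt.
Qed.

Lemma mnd_eqs (A : OB) (t : c1b K) (m e : C2) : is_mnd (Mnd A t m e) ->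
  interp A [t;t;t] [Lay [] m []; Lay [] m [t]] = interp A [t;t;t] [Lay [] m []; Lay [t] m []] /\
  interp A [t] [Lay [] m []; Lay [t] e []] = interp A [t] [Lay [] (bar t) []] /\
  interp A [t] [Lay [] m []; Lay [] e [t]] = interp A [t] [Lay [] (bar t) []].
Proof.
  intros HM. destruct (mnd_T2 HM) as [W [Tm Te]].
  destruct HM as [_ [_ [_ [E1 [E2 E3]]]]]. simpl in *. unfold wl, wr in *.
  split; [|split].
  - transitivity (vc m (hc m (bar t))); [symmetry; rfy|]. rewrite E1. rfy.
  - transitivity (vc m (hc (bar t) e)); [symmetry; rfy|]. rewrite E2. rfy.
  - transitivity (vc m (hc e (bar t))); [symmetry; rfy|]. rewrite E3. rfy.
Qed.


Variables (A A' : OB) (t s t' : c1b K) (m e n h l m' e' p : C2).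

Lemma wdl_T2 : is_wdl (Mnd A t m e) (Mnd A s n h) l ->
  wf1b t A A /\ wf1b s A A /\ T2 A A m [t;t] [t] /\ T2 A A e [] [t] /\
  T2 A A n [s;s] [s] /\ T2 A A h [] [s] /\ T2 A A l [t;s] [s;t].
Proof.
  intros HW. destruct HW as [_ [HT [HS [Hl _]]]].
  destruct (mnd_T2 HT) as [Wt [Tm Te]]. destruct (mnd_T2 HS) as [Ws [Tn Th]].
  simpl in *. refine (conj Wt (conj Ws (conj Tm (conj Te (conj Tn (conj Th _)))))). hbt.
Qed.

Lemma wdl_eqs : is_wdl (Mnd A t m e) (Mnd A s n h) l ->
  interp A [t;t;s] [Lay [] l []; Lay [] m [s]] =
    interp A [t;t;s] [Lay [s] m []; Lay [] l [t]; Lay [t] l []] /\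
  interp A [t;s;s] [Lay [] l []; Lay [t] n []] =
    interp A [t;s;s] [Lay [] n [t]; Lay [s] l []; Lay [] l [s]] /\
  interp A [s] [Lay [] l []; Lay [] e [s]] =
    interp A [s] [Lay [] n [t]; Lay [s] l []; Lay [s;t] h []; Lay [s] e []] /\
  interp A [t] [Lay [] l []; Lay [t] h []] =
    interp A [t] [Lay [s] m []; Lay [] l [t]; Lay [] e [s;t]; Lay [] h [t]].
Proof.
  intros HW. destruct (wdl_T2 HW) as [Wt [Ws [Tm [Te [Tn [Th Tl]]]]]].
  destruct HW as [_ [_ [_ [_ [E1 [E2 [E3 E4]]]]]]]. simpl in *. unfold wl, wr, comp1b in *. simpl in *.
  split; [|split; [|split]].
  - transitivity (vc l (hc m (bar s))); [symmetry; rfy|]. rewrite E1. rfy.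
  - transitivity (vc l (hc (bar t) n)); [symmetry; rfy|]. rewrite E2. rfy.
  - transitivity (vc l (hc e (bar s))); [symmetry; rfy|]. rewrite E3. rfy.
  - transitivity (vc l (hc (bar t) h)); [symmetry; rfy|]. rewrite E4. rfy.
Qed.

Lemma lbar_i : is_wdl (Mnd A t m e) (Mnd A s n h) l ->
  wdl_bar (Mnd A t m e) (Mnd A s n h) l = interp A [s;t] [Lay [] n [t]; Lay [s] l []; Lay [s;t] h []].
Proof.
  intros HW. destruct (wdl_T2 HW) as [Wt [Ws [Tm [Te [Tn [Th Tl]]]]]].
  unfold wdl_bar, wl, wr, comp1b; simpl. rfy.
Qed.

End Ax.

Section GL.
Variable K : TwoCat.
Local Notation nl := (@nil (c1b K)).
Variables (A : ob K) (t s : c1b K) (m e n h l : c2 K).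
Hypothesis HW : is_wdl (Mnd A t m e) (Mnd A s n h) l.

Ltac getfacts :=
  destruct (wdl_T2 HW) as [Wt [Ws [Tm [Te [Tn [Th Tl]]]]]];
  destruct (wdl_eqs HW) as [W1 [W2 [W3 W4]]];
  let HT := fresh in let HS := fresh in
  destruct HW as [_ [HT [HS _]]];
  destruct (mnd_eqs HT) as [At [Ult Urt]]; destruct (mnd_eqs HS) as [As [Uls Urs]].

 

Lemma GL_lin :
 interp A [s;t;t] [Lay [] n [t]; Lay [s] l []; Lay [s;t] h []; Lay [s] m []] =
 interp A [s;t;t] [Lay [s] m []; Lay [] n [t;t]; Lay [s] l [t]; Lay [s;t] h [t]].
Proof.
  getfacts.
  sw 2. rwa 1 [s] (@nil (c1b K)) W1. sw 0.
  rwa 3 [s;t] (@nil (c1b K)) W4. sw 2. sw 1.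
  rwa 0 [s] (@nil (c1b K)) (eq_sym At). sw 1.
  rwa 2 [s] [t] (eq_sym W1).
  rwa 3 [s] [s;t] Ult. rmbar 3. reflexivity.
Qed.


Lemma GL_L :
 interp A [s;t] [Lay [] n [t]; Lay [s] l []; Lay [s;t] h []] =
 interp A [s;t] [Lay [s] m []; Lay [] l [t]; Lay [] e [s;t]].
Proof.
  getfacts. symmetry.
  rwa 1 (@nil (c1b K)) [t] W3. rwa 0 (@nil (c1b K)) (@nil (c1b K)) (eq_sym GL_lin).
  rwa 3 [s] (@nil (c1b K)) Urt. rmbar 3. reflexivity.
Qed.

Lemma GL_M :
 interp A [t;s;t] [Lay [s] m []; Lay [] l [t]; Lay [t] n [t]; Lay [t;s] l []; Lay [t;s;t] h []] =
 interp A [t;s;t] [Lay [s] m []; Lay [] l [t]].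
Proof.
  getfacts.
  rwa 2 [t] (@nil (c1b K)) GL_L. sw 1. rwa 0 [s] (@nil (c1b K)) (eq_sym At).
  rwa 1 (@nil (c1b K)) [t] (eq_sym W1). rwa 2 (@nil (c1b K)) [s;t] Ult. rmbar 2. reflexivity.
Qed.

End GL.

Section Three.
Variable K : TwoCat.
Local Notation nl := (@nil (c1b K)).
Variables (A : ob K) (t0 t1 t2 : c1b K) (m0 e0 m1 e1 m2 e2 l01 l02 l12 : c2 K).
Hypothesis H : is_wdl2 (Mnd A t0 m0 e0) (Mnd A t1 m1 e1) (Mnd A t2 m2 e2) l01 l02 l12.
 

Definition LA : list (lay K) :=
  [Lay [t0;t1] m2 []; Lay [t0] l12 [t2]; Lay [] l02 [t1;t2]; Lay [] e2 [t0;t1;t2]].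
Definition Rr : list (lay K) :=
  [Lay [t1;t0] m2 []; Lay [t1] l02 [t2]; Lay [] l12 [t0;t2]; Lay [] e2 [t1;t0;t2]].

Lemma YB_i : interp A [t2;t1;t0] [Lay [] l01 [t2]; Lay [t1] l02 []; Lay [] l12 [t0]] =
  interp A [t2;t1;t0] [Lay [t0] l12 []; Lay [] l02 [t1]; Lay [t2] l01 []].
Proof.
  destruct H as [H01 [H02 [H12 YB]]].
  destruct (wdl_T2 H01) as [Wt1 [Wt0 [Tm1 [Te1 [Tm0 [Te0 Tl01]]]]]].
  destruct (wdl_T2 H02) as [Wt2 [_ [Tm2 [Te2 [_ [_ Tl02]]]]]].
  destruct (wdl_T2 H12) as [_ [_ [_ [_ [_ [_ Tl12]]]]]].
  simpl in YB. unfold wl, wr in YB.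
  transitivity (vcomp (hcomp l01 (bar t2)) (vcomp (hcomp (bar t1) l02) (hcomp l12 (bar t0))));
    [symmetry; rfy|]. rewrite YB. rfy.
Qed.

Ltac getall :=
  let H01 := fresh "H01" in let H02 := fresh "H02" in let H12 := fresh "H12" in
  destruct H as [H01 [H02 [H12 _]]];
  destruct (wdl_T2 H01) as [Wt1 [Wt0 [Tm1 [Te1 [Tm0 [Te0 Tl01]]]]]];
  destruct (wdl_T2 H02) as [Wt2 [_ [Tm2 [Te2 [_ [_ Tl02]]]]]];
  destruct (wdl_T2 H12) as [_ [_ [_ [_ [_ [_ Tl12]]]]]];
  destruct (wdl_eqs H01) as [W1_01 [W2_01 [W3_01 W4_01]]];
  destruct (wdl_eqs H02) as [W1_02 [W2_02 [W3_02 W4_02]]];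
  destruct (wdl_eqs H12) as [W1_12 [W2_12 [W3_12 W4_12]]];
  pose proof (GL_L H12) as GL_L12; pose proof (GL_M H02) as GL_M02;
  let HM2 := fresh in destruct H02 as [_ [HM2 _]];
  destruct (mnd_eqs HM2) as [At2 [Ult2 Urt2]];
  pose proof YB_i as YB.

Lemma Lc : interp A [t1;t0;t2] (LA ++ [Lay [] l01 [t2]]) =
           interp A [t1;t0;t2] (Lay [] l01 [t2] :: Rr).
Proof.
  getall. unfold LA, Rr; lcbn.
  sw 3. rwa 1 (@nil (c1b K)) [t2] (eq_sym YB). sw 0. reflexivity.
Qed.


Lemma WLam : interp A [t2;t2;t0;t1] [Lay [t0] l12 []; Lay [] l02 [t1]; Lay [] m2 [t0;t1]] =
  interp A [t2;t2;t0;t1] [Lay [t0;t1] m2 []; Lay [t0] l12 [t2]; Lay [] l02 [t1;t2];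
                          Lay [t2;t0] l12 []; Lay [t2] l02 [t1]].
Proof.
  getall. rwa 1 (@nil (c1b K)) [t1] W1_02. rwa 0 [t0] (@nil (c1b K)) W1_12. sw 2. reflexivity.
Qed.

Lemma Llin : interp A [t0;t1;t2;t2] (LA ++ [Lay [t0;t1] m2 []]) =
  interp A [t0;t1;t2;t2] (Lay [t0;t1] m2 [] :: map (wlay [] [t2]) LA).
Proof.
  getall. unfold LA; lcbn. sw 3. sw 2. sw 1. rwa 0 [t0;t1] (@nil (c1b K)) (eq_sym At2). reflexivity.
Qed.

Lemma LA3 : interp A [t0;t1;t2] (LA ++ LA) = interp A [t0;t1;t2] LA.
Proof.
  getall. pose proof Llin as LL. unfold LA in *; lcbn.
  rwa 0 (@nil (c1b K)) (@nil (c1b K)) LL. sw 4. sw 5. rwa 1 (@nil (c1b K)) [t2] (eq_sym WLam).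
  rwa 3 (@nil (c1b K)) [t0;t1;t2] Urt2. rmbar 3. reflexivity.
Qed.

Lemma Qcore : interp A [t1;t0;t2] (LA ++ [Lay [] l01 [t2]; Lay [t1] m0 [t2]; Lay [t1;t0] l02 []; Lay [t1;t0;t2] e0 []]) =
  interp A [t1;t0;t2] (LA ++ [Lay [] l01 [t2]]).
Proof.
  getall. pose proof Lc as LC. unfold LA, Rr in *; lcbn.
  rwa 0 (@nil (c1b K)) (@nil (c1b K)) LC. sw 4. sw 3. sw 5. sw 4. sw 6. sw 5.
  rwa 1 [t1] (@nil (c1b K)) GL_M02. rwa 0 (@nil (c1b K)) (@nil (c1b K)) (eq_sym LC). reflexivity.
Qed.


Lemma Qlem : interp A [t0;t2] (LA ++ [Lay [] m0 [t1;t2]; Lay [t0] l01 [t2]; Lay [t0;t1] e0 [t2]; Lay [t0] e1 [t2];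
                                     Lay [] m0 [t2]; Lay [t0] l02 []; Lay [t0;t2] e0 []]) =
  interp A [t0;t2] (LA ++ [Lay [] m0 [t1;t2]; Lay [t0] l01 [t2]; Lay [t0;t1] e0 [t2]; Lay [t0] e1 [t2]]).
Proof.
  getall. pose proof Qcore as QC. unfold LA in *; lcbn.
  rwa 4 (@nil (c1b K)) [t2] (eq_sym W3_01). sw 5. sw 6. sw 7. rwa 0 (@nil (c1b K)) (@nil (c1b K)) QC. rwa 4 (@nil (c1b K)) [t2] W3_01. reflexivity.
Qed.

Lemma A2core : interp A [t1;t2;t0] (LA ++ [Lay [] l01 [t2]; Lay [t1] l02 []; Lay [] m1 [t2;t0]; Lay [t1] l12 [t0]; Lay [t1;t2] e1 [t0]]) =
  interp A [t1;t2;t0] (LA ++ [Lay [] l01 [t2]; Lay [t1] l02 []]).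
Proof.
  getall. pose proof Lc as LC. pose proof LA3 as L3. unfold LA, Rr in *; lcbn.
  rwa 6 (@nil (c1b K)) [t0] GL_L12. rwa 5 [t1] (@nil (c1b K)) W1_02. sw 7. sw 8.
  rwa 4 (@nil (c1b K)) (@nil (c1b K)) (eq_sym LC). rwa 0 (@nil (c1b K)) (@nil (c1b K)) L3. reflexivity.
Qed.

Lemma A1 : interp A [t1;t0;t2;t2] (LA ++ [Lay [] l01 [t2]; Lay [t1;t0] m2 []; Lay [t1] m0 [t2;t2]; Lay [t1;t0] l02 [t2]; Lay [t1;t0;t2] e0 [t2]]) =
  interp A [t1;t0;t2;t2] (LA ++ [Lay [] l01 [t2]; Lay [t1;t0] m2 []]).
Proof.
  getall. pose proof Llin as LL. pose proof Qcore as QC. unfold LA in *; lcbn.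
  sw 4. rwa 0 (@nil (c1b K)) (@nil (c1b K)) LL. rwa 1 (@nil (c1b K)) [t2] QC. rwa 0 (@nil (c1b K)) (@nil (c1b K)) (eq_sym LL). sw 4. reflexivity.
Qed.

Lemma A2 : interp A [t1;t2;t0;t2] (LA ++ [Lay [] l01 [t2]; Lay [t1;t0] m2 []; Lay [t1] l02 [t2]; Lay [] m1 [t2;t0;t2]; Lay [t1] l12 [t0;t2]; Lay [t1;t2] e1 [t0;t2]]) =
  interp A [t1;t2;t0;t2] (LA ++ [Lay [] l01 [t2]; Lay [t1;t0] m2 []; Lay [t1] l02 [t2]]).
Proof.
  getall. pose proof Llin as LL. pose proof A2core as QC. unfold LA in *; lcbn.
  sw 4. rwa 0 (@nil (c1b K)) (@nil (c1b K)) LL. rwa 1 (@nil (c1b K)) [t2] QC. rwa 0 (@nil (c1b K)) (@nil (c1b K)) (eq_sym LL). sw 4. reflexivity.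
Qed.

End Three.

Section Cells.
Variable K : TwoCat.
Notation vc := (@vcomp K).

Lemma mnd1_facts (A A' : ob K) (t t' v : c1b K) (m e m' e' p : c2 K) :
  is_mnd (Mnd A t m e) -> is_mnd (Mnd A' t' m' e') -> is_mnd1 (Mnd A t m e) (Mnd A' t' m' e') v p ->
  wf1b v A A' /\ T2 A A' p [t';v] [v;t] /\
  interp A [t';t';v] [Lay [] p []; Lay [] m' [v]] =
    interp A [t';t';v] [Lay [v] m []; Lay [] p [t]; Lay [t'] p []] /\
  interp A [v] [Lay [] p []; Lay [] e' [v]] = interp A [v] [Lay [v] e []].
Proof.
  intros HM HM' [Wv [Hp [E1 E2]]].
  destruct (mnd_T2 HM) as [Wt [Tm Te]]. destruct (mnd_T2 HM') as [Wt' [Tm' Te']].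
  simpl in *. unfold wl, wr, comp1b in *; simpl in *.
  assert (Tp : T2 A A' p [t';v] [v;t]).
  { eapply hb_T2; [eassumption | pathtac | pathtac | ..].
    - eapply cellO2; eassumption. - eapply barO2; eassumption.
    - eapply cellO2; eassumption. - eapply barO2; eassumption. }
  refine (conj Wv (conj Tp (conj _ _))).
  - transitivity (vc p (hcomp m' (bar v))); [symmetry; rfy|]. rewrite E1. rfy.
  - transitivity (vc p (hcomp e' (bar v))); [symmetry; rfy|]. rewrite E2. rfy.
Qed.

Lemma wdl1_eq (A A' : ob K) (t s t' s' v : c1b K) (m e n h m' e' n' h' l l' xi zeta : c2 K) :
  is_wdl (Mnd A t m e) (Mnd A s n h) l -> is_wdl (Mnd A' t' m' e') (Mnd A' s' n' h') l' ->
  is_wdl1 (Mnd A t m e) (Mnd A s n h) l (Mnd A' t' m' e') (Mnd A' s' n' h') l' v xi zeta ->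
  interp A [t';s';v] [Lay [v] l []; Lay [] xi [s]; Lay [t'] zeta []] =
  interp A [t';s';v] [Lay [v] n [t]; Lay [v;s] l []; Lay [v;s;t] h []; Lay [] zeta [t];
                      Lay [s'] xi []; Lay [] l' [v]].
Proof.
  intros HW HW' [Hx [Hz E]].
  destruct (wdl_T2 HW) as [Wt [Ws [Tm [Te [Tn [Th Tl]]]]]].
  destruct (wdl_T2 HW') as [Wt' [Ws' [Tm' [Te' [Tn' [Th' Tl']]]]]].
  destruct HW as [_ [HT [HS _]]]. destruct HW' as [_ [HT' [HS' _]]].
  destruct (mnd1_facts HT HT' Hx) as [Wv [Tx _]].
  destruct (mnd1_facts HS HS' Hz) as [_ [Tz _]].
  unfold wdl_bar in E. simpl in *. unfold wl, wr, comp1b in *; simpl in *.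
  transitivity (vc (hcomp (bar v) l) (vc (hcomp xi (bar s)) (hcomp (bar t') zeta))); [symmetry; rfy|].
  rewrite E. rfy.
Qed.

End Cells.

Section Main.
Variable K : TwoCat.
Variables (A A' : ob K) (t0 t1 t2 u0 u1 u2 v : c1b K).
Variables (m0 e0 m1 e1 m2 e2 n0 f0 n1 f1 n2 f2 l01 l02 l12 k01 k02 k12 x0 x1 x2 : c2 K).
Hypothesis H : is_wdl2 (Mnd A t0 m0 e0) (Mnd A t1 m1 e1) (Mnd A t2 m2 e2) l01 l02 l12.
Hypothesis H' : is_wdl2 (Mnd A' u0 n0 f0) (Mnd A' u1 n1 f1) (Mnd A' u2 n2 f2) k01 k02 k12.
Hypothesis Hv : is_wdl2_1 (Mnd A t0 m0 e0) (Mnd A t1 m1 e1) (Mnd A t2 m2 e2) l01 l02 l12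
   (Mnd A' u0 n0 f0) (Mnd A' u1 n1 f1) (Mnd A' u2 n2 f2) k01 k02 k12 v x0 x1 x2.

Ltac getM :=
  let H01 := fresh "H01" in let H02 := fresh "H02" in let H12 := fresh "H12" in
  destruct H as [H01 [H02 [H12 _]]];
  destruct (wdl_T2 H01) as [Wt1 [Wt0 [Tm1 [Te1 [Tm0 [Te0 Tl01]]]]]];
  destruct (wdl_T2 H02) as [Wt2 [_ [Tm2 [Te2 [_ [_ Tl02]]]]]];
  destruct (wdl_T2 H12) as [_ [_ [_ [_ [_ [_ Tl12]]]]]];
  let H01' := fresh "H01'" in let H02' := fresh "H02'" in let H12' := fresh "H12'" in
  destruct H' as [H01' [H02' [H12' _]]];
  destruct (wdl_T2 H01') as [Wu1 [Wu0 [Tn1 [Tf1 [Tn0 [Tf0 Tk01]]]]]];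
  destruct (wdl_T2 H02') as [Wu2 [_ [Tn2 [Tf2 [_ [_ Tk02]]]]]];
  destruct (wdl_T2 H12') as [_ [_ [_ [_ [_ [_ Tk12]]]]]];
  let V1 := fresh "V1" in let V2 := fresh "V2" in let V3 := fresh "V3" in
  destruct Hv as [V1 [V2 V3]];
  pose proof (wdl1_eq H01 H01' V1) as Wd01;
  pose proof (wdl1_eq H02 H02' V2) as Wd02;
  pose proof (wdl1_eq H12 H12' V3) as Wd12;
  destruct (wdl_eqs H01) as [_ [_ [W3_01 _]]]; destruct (wdl_eqs H01') as [_ [_ [W3_01' _]]];
  destruct V1 as [Hx1 [Hx0 _]]; destruct V2 as [Hx2 _];
  destruct H01 as [_ [HM1 [HM0 _]]]; destruct H02 as [_ [HM2 _]];
  destruct H01' as [_ [HN1 [HN0 _]]]; destruct H02' as [_ [HN2 _]];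
  destruct (mnd1_facts HM1 HN1 Hx1) as [Wv [Tx1 [Mx1 Ux1]]];
  destruct (mnd1_facts HM0 HN0 Hx0) as [_ [Tx0 [Mx0 Ux0]]];
  destruct (mnd1_facts HM2 HN2 Hx2) as [_ [Tx2 [Mx2 Ux2]]].



Definition Yd := [Lay [] x1 [t0;t2]; Lay [u1] x0 [t2]; Lay [u1;u0] x2 []].
Definition Fd := map (wlay [v] []) (LA t0 t1 t2 m2 e2 l02 l12) ++ [Lay [v] l01 [t2]].

Lemma KL : interp A [u1;u0;u2;v] (Fd ++ Yd ++ map (wlay [] [v]) (Rr u0 u1 u2 n2 f2 k02 k12)) =
           interp A [u1;u0;u2;v] (Fd ++ Yd).
Proof.
  pose proof (A1 H) as HA1. pose proof (A2 H) as HA2. pose proof (Lc H) as HLc. pose proof (LA3 H) as HL3.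
  getM. unfold Fd, Yd, LA, Rr in *. lcbn.
  rwa 7 [u1;u0] (@nil (c1b K)) Mx2.
  sw 6. sw 5. sw 9.
  rwa 0 [v] (@nil (c1b K)) (eq_sym HA1). sw 8. sw 7. sw 6.
  rwa 7 [u1] [t2] (eq_sym Wd02). sw 6. sw 10. sw 9.
  rwa 0 [v] (@nil (c1b K)) (eq_sym HA2). rwa 7 (@nil (c1b K)) [t0;t2] (eq_sym Wd12).
  sw 11. sw 10. sw 9. rwa 8 (@nil (c1b K)) [t1;t0;t2] Ux2.
  rwa 4 [v] (@nil (c1b K)) (eq_sym HLc). rwa 0 [v] (@nil (c1b K)) HL3.
  reflexivity.
Qed.


Let S0 := Mnd A t0 m0 e0. Let S1 := Mnd A t1 m1 e1. Let S2 := Mnd A t2 m2 e2.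
Let S0' := Mnd A' u0 n0 f0. Let S1' := Mnd A' u1 n1 f1. Let S2' := Mnd A' u2 n2 f2.

Lemma main2 :
  vcomp (hcomp (id2 (id1 A')) (xi012 S0 S1 S2 l01 l02 l12 S0' S1' v x0 x1 x2))
        (hcomp (phi1_02 S0' S1' S2' k01 k02 k12) (bar v)) =
  vcomp (hcomp (bar v) (phi1_02 S0 S1 S2 l01 l02 l12))
        (hcomp (xi02 S0 S2 l02 S0' v x0 x2) (id2 (id1 A))).
Proof.
  pose proof KL as HKL. pose proof (Lc H') as HLc'. pose proof (Qlem H) as HQ.
  unfold Fd, Yd, LA, Rr in *. cbn [map app] in HKL. unfold wlay in HKL. cbn [app lL lA lR] in HKL.
  getM.
  unfold xi012, xi02, phi1_02, lbar012, larrow012, wdl_bar, wl, wr, comp1b, id1b, S0, S1, S2, S0', S1', S2'.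
  cbn [Defs.mt Defs.m0 Defs.mmu Defs.meta Defs.bar Defs.cell].
  etransitivity; [reify|]. etransitivity; [|symmetry; reify]. lcbn.
  rwa 14 (@nil (c1b K)) [u2;v] (eq_sym W3_01'). rwa 10 (@nil (c1b K)) [v] HLc'. sw 9.
  rwa 4 (@nil (c1b K)) [t2] (eq_sym Wd01). rwa 0 (@nil (c1b K)) (@nil (c1b K)) HKL.
  symmetry.
  rwa 0 [v] (@nil (c1b K)) HQ. rwa 4 [v] [t2] (eq_sym W3_01). rwa 5 (@nil (c1b K)) [t0;t2] (eq_sym Ux1).
  sw 6. sw 7. reflexivity.
Qed.

End Main.

Unset Implicit Arguments.
Set Strict Implicit.

Theorem lemma4p4 (K : TwoCat) (S0 S1 S2 S0' S1' S2' : mnd K)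
  (l01 l02 l12 l01' l02' l12' : c2 K) (v : c1b K) (x0 x1 x2 : c2 K)
  (H : is_wdl2 S0 S1 S2 l01 l02 l12)
  (H' : is_wdl2 S0' S1' S2' l01' l02' l12')
  (Hv : is_wdl2_1 S0 S1 S2 l01 l02 l12 S0' S1' S2' l01' l02' l12' v x0 x1 x2) :
  comp_mnd1 (v, xi012 S0 S1 S2 l01 l02 l12 S0' S1' v x0 x1 x2)
            (id1b (m0 S0'), phi1_02 S0' S1' S2' l01' l02' l12')
  = comp_mnd1 (id1b (m0 S0), phi1_02 S0 S1 S2 l01 l02 l12)
              (v, xi02 S0 S2 l02 S0' v x0 x2).
Proof.
  destruct S0 as [A t0 m0 e0], S1 as [A1 t1 m1 e1], S2 as [A2 t2 m2 e2].
  destruct S0' as [B u0 n0 f0], S1' as [B1 u1 n1 f1], S2' as [B2 u2 n2 f2].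
  assert (E1 : A1 = A) by (destruct H as [[E _] _]; exact E).
  assert (E2 : A2 = A) by (destruct H as [_ [[E _] _]]; exact E).
  assert (E3 : B1 = B) by (destruct H' as [[E _] _]; exact E).
  assert (E4 : B2 = B) by (destruct H' as [_ [[E _] _]]; exact E).
  subst A1 A2 B1 B2.
  assert (Wv : wf1b v A B) by (destruct Hv as [[[W _] _] _]; exact W).
  pose proof (main2 H H' Hv) as M.
  unfold comp_mnd1. cbn [Defs.m0]. f_equal.
  - unfold comp1b, id1b. cbn [Defs.cell Defs.bar].
    pose proof (T2_bar Wv) as Tb.
    destruct Wv as [[W1 W2] _].
    f_equal.
    + rewrite <- W2 at 1. rewrite comp1_id1l. rewrite <- W1. rewrite comp1_id1r. reflexivity.
    + rewrite (hc_idl Tb), (hc_idr Tb). reflexivity.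
  - exact M.
Qed.
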